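(* (Craig's and Lyndon's interpolation.) For all formulas $\phi,\psi$ of $\mathbf{PL}(\mathbin{\backslash\!\!/})$: if $\phi\models\psi$, then there is a formula $\theta$ such that $\phi\models\theta$, $\theta\models\psi$, and $\mathsf{P}^i(\theta)\subseteq\mathsf{P}^i(\phi)\cap\mathsf{P}^i(\psi)$ for each $i\in\{+,-\}$.
   Context: Fix a countably infinite set $\mathsf{Prop}$ of propositional variables. Classical formulas are generated by $\alpha ::= p \mid \bot \mid \neg\alpha \mid \alpha\wedge\alpha \mid \alpha\vee\alpha$ with $p\in\mathsf{Prop}$. Formulas of $\mathbf{PL}(\mathbin{\backslash\!\!/})$ are generated by $\phi ::= \alpha \mid \phi\wedge\phi \mid \phi\vee\phi \mid \phi\mathbin{\backslash\!\!/}\phi$ where $\alpha$ is classical. A team with domain $X\subseteq\mathsf{Prop}$ is a set $t\subseteq 2^X$ of valuations. For a team $t$ whose domain contains the variables of the formula: $t\models p$ iff $v(p)=1$ for all $v\in t$; $t\models\bot$ iff $t=\emptyset$; $t\models\neg\alpha$ iff $\{v\}\not\models\alpha$ for all $v\in t$; $t\models\phi\wedge\psi$ iff both hold; $t\models\phi\vee\psi$ iff there are $s,u\subseteq t$ with $t=s\cup u$, $s\models\phi$, $u\models\psi$; $t\models\phi\mathbin{\backslash\!\!/}\psi$ iff $t\models\phi$ or $t\models\psi$. $\phi\models\psi$ means every team satisfying $\phi$ satisfies $\psi$. Polarity: an occurrence of a propositional variable in $\phi$ is positive (negative) if it lies in the scope of an even (odd) number of negations; $\mathsf{P}^+(\phi)$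 ($\mathsf{P}^-(\phi)$) is the set of variables with a positive (negative) occurrence in $\phi$. *)

(* Defs.v *)
Inductive cform : Type :=
| CVar : nat -> cform
| CBot : cform
| CNeg : cform -> cform
| CAnd : cform -> cform -> cform
| COr  : cform -> cform -> cform.

Inductive form : Type :=
| FCl   : cform -> form
| FAnd  : form -> form -> form
| FOr   : form -> form -> form
| FGor  : form -> form -> form.

(* A valuation on a domain X ⊆ nat is represented canonically by a total
   function nat -> bool that is false outside X; a team is a set of such. *)
Definition valuation := nat -> bool.
Definition team := valuation -> Prop.

Definition team_on (X : nat -> Prop) (t : team) : Prop :=
  forall v, t v -> forall p, ~ X p -> v p = false.

Definition team_split (t s u : team) : Prop :=
  forall v, t v <-> (s v \/ u v).

Fixpoint csat (t : team) (a : cform) : Prop :=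
  match a with
  | CVar p => forall v, t v -> v p = true
  | CBot => forall v, ~ t v
  | CNeg b => forall v, t v -> ~ csat (fun w => w = v) b
  | CAnd b c => csat t b /\ csat t c
  | COr b c => exists s u, team_split t s u /\ csat s b /\ csat u c
  end.

Fixpoint sat (t : team) (f : form) : Prop :=
  match f with
  | FCl a => csat t a
  | FAnd g h => sat t g /\ sat t h
  | FOr g h => exists s u, team_split t s u /\ sat s g /\ sat u h
  | FGor g h => sat t g \/ sat t h
  end.

Fixpoint cpol (a : cform) (p : nat) (b : bool) : Prop :=
  match a with
  | CVar q => p = q /\ b = true
  | CBot => False
  | CNeg c => cpol c p (negb b)
  | CAnd c d => cpol c p b \/ cpol d p b
  | COr c d => cpol c p b \/ cpol d p b
  end.

Fixpoint pol (f : form) (p : nat) (b : bool) : Prop :=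
  match f with
  | FCl a => cpol a p b
  | FAnd g h | FOr g h | FGor g h => pol g p b \/ pol h p b
  end.

Definition Ppos (f : form) (p : nat) : Prop := pol f p true.
Definition Pneg (f : form) (p : nat) : Prop := pol f p false.

Definition vars (f : form) (p : nat) : Prop := Ppos f p \/ Pneg f p.

Definition entails (f g : form) : Prop :=
  forall (X : nat -> Prop) (t : team),
    (forall p, vars f p -> X p) -> (forall p, vars g p -> X p) ->
    team_on X t -> sat t f -> sat t g.

(* Main.v *)
Require Import Defs.
From Stdlib Require Import List Bool Arith Classical.
Import ListNotations.

Fixpoint eval (v : valuation) (a : cform) : bool :=
  match a with
  | CVar p => v p
  | CBot => false
  | CNeg b => negb (eval v b)
  | CAnd b c => eval v b && eval v c
  | COr b c => eval v b || eval v c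
  end.

Lemma flat : forall a t, csat t a <-> (forall v, t v -> eval v a = true).
Proof.
  induction a as [p| |b IH|b IHb c IHc|b IHb c IHc]; intros t; simpl.
  - tauto.
  - split; intros H v Hv; [exfalso; eapply H; eauto | specialize (H v Hv); discriminate].
  - split; intros H v Hv; specialize (H v Hv).
    + destruct (eval v b) eqn:E; [|reflexivity]. exfalso; apply H.
      apply IH. intros w ->; exact E.
    + intro Hc. pose proof (proj1 (IH _) Hc v eq_refl) as Hc2. simpl in Hc2. clear Hc. rename Hc2 into Hc. rewrite Hc in H; discriminate.
  - rewrite IHb, IHc. split.
    + intros [H1 H2] v Hv. rewrite H1, H2; auto.
    + intros H; split; intros v Hv; specialize (H v Hv); apply andb_true_iff in H; tauto.
  - split.
    + intros [s [u [Hs [H1 H2]]]] v Hv. apply Hs in Hv. rewrite IHb in H1. rewrite IHc in H2.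
      destruct Hv as [Hv|Hv]; [rewrite H1 | rewrite H2, orb_true_r]; auto.
    + intros H. exists (fun v => t v /\ eval v b = true), (fun v => t v /\ eval v c = true).
      split; [|split].
      * intros v; split.
        -- intros Hv. pose proof (H v Hv) as E. apply orb_true_iff in E. tauto.
        -- intros [[Hv _]|[Hv _]]; exact Hv.
      * apply IHb. intros v [_ E]; exact E.
      * apply IHc. intros v [_ E]; exact E.
Qed.

Definition ccompat (a : cform) (v v' : valuation) : Prop :=
  forall p, (cpol a p true -> v p = true -> v' p = true) /\
            (cpol a p false -> v p = false -> v' p = false).

Lemma mono_eval : forall a v v', ccompat a v v' -> eval v a = true -> eval v' a = true.
Proof.
  induction a as [q| |b IH|b IHb c IHc|b IHb c IHc]; intros v v' Hc; simpl.
  - intros H. apply (proj1 (Hc q)); simpl; auto.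
  - auto.
  - intros H. destruct (eval v' b) eqn:E; [|reflexivity].
    assert (eval v b = true).
    { apply (IH v' v); auto. intros p; split; intros Hp Hv.
      - destruct (v p) eqn:Ev; auto. exfalso.
        pose proof (proj2 (Hc p) Hp Ev). congruence.
      - destruct (v p) eqn:Ev; auto. exfalso.
        pose proof (proj1 (Hc p) Hp Ev). congruence. }
    rewrite H0 in H; discriminate.
  - intros H; apply andb_true_iff in H; destruct H as [H1 H2].
    rewrite (IHb v v'), (IHc v v'); auto;
    intros p; split; intros Hp; apply (Hc p); simpl; auto.
  - intros H; apply orb_true_iff in H; apply orb_true_iff; destruct H as [H|H];
    [left; apply (IHb v v') | right; apply (IHc v v')]; auto;
    intros p; split; intros Hp; apply (Hc p); simpl; auto.
Qed.

Lemma eval_ext : forall a v v', (forall q, v q = v' q) -> eval v a = eval v' a.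
Proof. induction a; intros v v' H; simpl; try rewrite (IHa v v'); try rewrite (IHa1 v v'); try rewrite (IHa2 v v'); auto. Qed.

Fixpoint csubst (a : cform) (p : nat) (c : bool) : cform :=
  match a with
  | CVar q => if Nat.eqb q p then (if c then CNeg CBot else CBot) else CVar q
  | CBot => CBot
  | CNeg b => CNeg (csubst b p c)
  | CAnd b d => CAnd (csubst b p c) (csubst d p c)
  | COr b d => COr (csubst b p c) (csubst d p c)
  end.

Definition upd (v : valuation) p (c : bool) : valuation :=
  fun q => if Nat.eqb q p then c else v q.

Lemma eval_subst : forall a v p c, eval v (csubst a p c) = eval (upd v p c) a.
Proof.
  induction a; intros v p c; simpl; try rewrite IHa; try rewrite IHa1; try rewrite IHa2; auto.
  unfold upd. destruct (Nat.eqb n p); destruct c; reflexivity.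
Qed.

Lemma pol_subst : forall a p c q s, cpol (csubst a p c) q s -> cpol a q s /\ q <> p.
Proof.
  induction a; intros p c q s; simpl.
  - destruct (Nat.eqb_spec n p); [destruct c; simpl; tauto|].
    simpl. intros [-> ->]; auto.
  - tauto.
  - apply IHa.
  - intros [H|H]; [apply IHa1 in H|apply IHa2 in H]; tauto.
  - intros [H|H]; [apply IHa1 in H|apply IHa2 in H]; tauto.
Qed.

Definition cent a b := forall v, eval v a = true -> eval v b = true.

Lemma mono_upd : forall a p d v, ~ cpol a p d -> eval v a = true -> eval (upd v p (negb d)) a = true.
Proof.
  intros a p d v Hn. apply mono_eval. intros q; unfold upd.
  destruct (Nat.eqb_spec q p) as [->|]; split; intros Hp Hv; auto;
  destruct d; simpl; auto; exfalso; auto.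
Qed.

Lemma mono_from_upd : forall b p c v, ~ cpol b p c -> eval (upd v p c) b = true -> eval v b = true.
Proof.
  intros b p c v Hn. apply mono_eval. intros q; unfold upd.
  destruct (Nat.eqb_spec q p) as [->|]; split; intros Hp Hv; auto;
  destruct c; try discriminate; exfalso; auto.
Qed.

Lemma upd_same : forall a v p c, v p = c -> eval (upd v p c) a = eval v a.
Proof.
  intros. apply eval_ext. intros q; unfold upd. destruct (Nat.eqb_spec q p); subst; auto.
Qed.

Definition lit p (c : bool) := if c then CVar p else CNeg (CVar p).

Lemma eval_lit : forall v p c, eval v (lit p c) = true -> v p = c.
Proof. intros v p c; destruct c; simpl; auto. destruct (v p); simpl; auto; discriminate. Qed.

Lemma pol_lit : forall p c q s, cpol (lit p c) q s -> q = p /\ s = c.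
Proof. intros p c q s; destruct c; simpl; intros [-> H]; split; auto; destruct s; simpl in *; auto; discriminate. Qed.

Lemma eval_lit2 : forall v p c, v p = c -> eval v (lit p c) = true.
Proof. intros v p c <-; destruct (v p) eqn:E; simpl; rewrite ?E; reflexivity. Qed.

Definition good a b p a' := cent a a' /\ cent a' b /\ (forall q s, cpol a' q s -> cpol a q s)
   /\ (forall s, cpol a' p s -> cpol b p s).

Lemma neg_ne : forall x c : bool, x <> c -> x = negb c.
Proof. intros [] []; simpl; congruence. Qed.

Lemma stepF1 : forall a b p c, cent a b -> ~ cpol b p (negb c) -> cpol a p c -> cpol b p c ->
  exists a', good a b p a'.
Proof.
  intros a b p c Hab Hn Ha Hb.
  exists (COr (csubst a p (negb c)) (CAnd (csubst a p c) (lit p c))).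
  split; [|split; [|split]].
  - intros v Hv. simpl. rewrite !eval_subst. destruct (bool_dec (v p) c) as [E|E].
    + rewrite (upd_same a v p c E), Hv, eval_lit2; auto. apply orb_true_r.
    + apply neg_ne in E. rewrite (upd_same a v p _ E), Hv; auto.
  - intros v Hv. simpl in Hv. rewrite !eval_subst in Hv. apply orb_true_iff in Hv.
    destruct Hv as [Hv|Hv].
    + apply (mono_from_upd b p (negb c)); auto.
    + apply andb_true_iff in Hv; destruct Hv as [H1 H2]. apply eval_lit in H2.
      rewrite upd_same in H1; auto.
  - intros q s H; simpl in H. destruct H as [H|[H|H]].
    + apply pol_subst in H; tauto.
    + apply pol_subst in H; tauto.
    + apply pol_lit in H; destruct H; subst; auto.
  - intros s H; simpl in H. destruct H as [H|[H|H]].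
    + apply pol_subst in H; tauto.
    + apply pol_subst in H; tauto.
    + apply pol_lit in H; destruct H; subst; auto.
Qed.

Lemma stepF2 : forall a b p c, cent a b -> ~ cpol b p (negb c) -> ~ cpol a p c ->
  exists a', good a b p a'.
Proof.
  intros a b p c Hab Hn Ha.
  exists (csubst a p (negb c)). split; [|split; [|split]].
  - intros v Hv. rewrite eval_subst. apply mono_upd; auto.
  - intros v Hv. rewrite eval_subst in Hv. apply (mono_from_upd b p (negb c)); auto.
  - intros q s H; apply pol_subst in H; tauto.
  - intros s H; apply pol_subst in H; tauto.
Qed.

Lemma stepD : forall a b p, cent a b -> ~ cpol b p true -> ~ cpol b p false ->
  exists a', good a b p a'.
Proof.
  intros a b p Hab H1 H2.
  exists (COr (csubst a p true) (csubst a p false)). split; [|split; [|split]].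
  - intros v Hv. simpl. rewrite !eval_subst. destruct (v p) eqn:E.
    + rewrite upd_same, Hv; auto.
    + rewrite (upd_same a v p false), Hv; auto. apply orb_true_r.
  - intros v Hv. simpl in Hv. rewrite !eval_subst in Hv. apply orb_true_iff in Hv.
    destruct Hv as [Hv|Hv]; [apply (mono_from_upd b p true)|apply (mono_from_upd b p false)]; auto.
  - intros q s [H|H]; apply pol_subst in H; tauto.
  - intros s [H|H]; apply pol_subst in H; tauto.
Qed.

Lemma step : forall a b p, cent a b -> exists a', good a b p a'.
Proof.
  intros a b p Hab.
  destruct (classic (cpol b p true)) as [Bt|Bt]; destruct (classic (cpol b p false)) as [Bf|Bf].
  - exists a. split; [intros v; auto|split; [exact Hab|split; auto]]. intros [] _; auto.
  - destruct (classic (cpol a p true)).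
    + apply (stepF1 a b p true); auto.
    + apply (stepF2 a b p true); auto.
  - destruct (classic (cpol a p false)).
    + apply (stepF1 a b p false); auto.
    + apply (stepF2 a b p false); auto.
  - apply stepD; auto.
Qed.

Lemma iter : forall L a b, cent a b -> exists a', cent a a' /\ cent a' b /\
  (forall q s, cpol a' q s -> cpol a q s) /\ (forall q s, In q L -> cpol a' q s -> cpol b q s).
Proof.
  induction L as [|p L IH]; intros a b Hab.
  - exists a. split; [intros v; auto|split; [exact Hab|split; [auto|intros q s []]]].
  - destruct (step a b p Hab) as [a1 [H1 [H2 [H3 H4]]]].
    destruct (IH a1 b H2) as [a2 [G1 [G2 [G3 G4]]]].
    exists a2. split; [|split; [|split]].
    + intros v Hv; auto.
    + auto.
    + auto.
    + intros q s [<-|Hq] Hp; auto.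
Qed.

Fixpoint cvars a : list nat :=
  match a with
  | CVar p => [p]
  | CBot => []
  | CNeg b => cvars b
  | CAnd b c | COr b c => cvars b ++ cvars c
  end.

Lemma cvars_pol : forall a q s, cpol a q s -> In q (cvars a).
Proof.
  induction a; intros q s; simpl; try tauto.
  - intros [-> _]; auto.
  - apply IHa.
  - intros [H|H]; apply in_or_app; eauto.
  - intros [H|H]; apply in_or_app; eauto.
Qed.

Lemma lyndon_cl : forall a b, cent a b -> exists g, cent a g /\ cent g b /\
  (forall q s, cpol g q s -> cpol a q s /\ cpol b q s).
Proof.
  intros a b H. destruct (iter (cvars a) a b H) as [g [H1 [H2 [H3 H4]]]].
  exists g; split; [exact H1|split; [exact H2|]]. intros q s Hp. split; auto. apply H4; auto. eapply cvars_pol; eauto.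
Qed.

Fixpoint nf (f : form) : list cform :=
  match f with
  | FCl a => [a]
  | FAnd g h => flat_map (fun a => map (fun b => CAnd a b) (nf h)) (nf g)
  | FOr g h => flat_map (fun a => map (fun b => COr a b) (nf h)) (nf g)
  | FGor g h => nf g ++ nf h
  end.

Lemma nf_sat : forall f T, sat T f <-> exists a, In a (nf f) /\ csat T a.
Proof.
  induction f as [a|f IHf g IHg|f IHf g IHg|f IHf g IHg]; intros T; simpl.
  - split; [intros H; exists a; auto | intros [a' [[<-|[]] H]]; exact H].
  - rewrite IHf, IHg. split.
    + intros [[a [Ha Ta]] [b [Hb Tb]]]. exists (CAnd a b). split.
      * apply in_flat_map. exists a; split; auto. apply in_map_iff. exists b; auto.
      * simpl; auto.
    + intros [x [Hx Tx]]. apply in_flat_map in Hx. destruct Hx as [a [Ha Hx]].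
      apply in_map_iff in Hx. destruct Hx as [b [<- Hb]]. destruct Tx. split; eauto.
  - split.
    + intros [s [u [Hs [Hf Hg]]]]. apply IHf in Hf. apply IHg in Hg.
      destruct Hf as [a [Ha Ta]]; destruct Hg as [b [Hb Tb]].
      exists (COr a b). split.
      * apply in_flat_map. exists a; split; auto. apply in_map_iff. exists b; auto.
      * simpl; exists s, u; auto.
    + intros [x [Hx Tx]]. apply in_flat_map in Hx. destruct Hx as [a [Ha Hx]].
      apply in_map_iff in Hx. destruct Hx as [b [<- Hb]].
      destruct Tx as [s [u [Hs [Ts Tu]]]]. exists s, u. split; auto.
      split; [apply IHf|apply IHg]; eauto.
  - rewrite IHf, IHg. split.
    + intros [[a [Ha Ta]]|[a [Ha Ta]]]; exists a; split; auto; apply in_or_app; auto.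
    + intros [a [Ha Ta]]. apply in_app_or in Ha. destruct Ha; [left|right]; eauto.
Qed.

Lemma nf_pol : forall f a p s, In a (nf f) -> cpol a p s -> pol f p s.
Proof.
  induction f as [a0|f IHf g IHg|f IHf g IHg|f IHf g IHg]; intros a p s Ha Hp; simpl in *.
  - destruct Ha as [<-|[]]; auto.
  - apply in_flat_map in Ha. destruct Ha as [x [Hx Ha]].
    apply in_map_iff in Ha. destruct Ha as [y [<- Hy]]. destruct Hp; [left|right]; eauto.
  - apply in_flat_map in Ha. destruct Ha as [x [Hx Ha]].
    apply in_map_iff in Ha. destruct Ha as [y [<- Hy]]. destruct Hp; [left|right]; eauto.
  - apply in_app_or in Ha. destruct Ha; [left|right]; eauto.
Qed.

Lemma nf_ne : forall f, exists a, In a (nf f).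
Proof.
  induction f as [a|f [a Ha] g [b Hb]|f [a Ha] g [b Hb]|f [a Ha] g _]; simpl.
  - exists a; auto.
  - exists (CAnd a b). apply in_flat_map. exists a; split; auto. apply in_map_iff. exists b; auto.
  - exists (COr a b). apply in_flat_map. exists a; split; auto. apply in_map_iff. exists b; auto.
  - exists a; apply in_or_app; auto.
Qed.

Lemma entails_glob : forall f g, entails f g -> forall T, sat T f -> sat T g.
Proof.
  intros f g H T HT. apply (H (fun _ => True)); auto.
  intros v _ p Hp; exfalso; apply Hp; exact I.
Qed.

Lemma nf_cent : forall f g, entails f g -> forall a, In a (nf f) -> exists b, In b (nf g) /\ cent a b.
Proof.
  intros f g H a Ha.
  set (T := fun v => eval v a = true).
  assert (HT : sat T f). { apply nf_sat. exists a; split; auto. apply flat. unfold T; auto. }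
  apply (entails_glob f g H) in HT. apply nf_sat in HT. destruct HT as [b [Hb Tb]].
  exists b; split; auto. rewrite flat in Tb. exact Tb.
Qed.

Lemma collect : forall (R : cform -> cform -> Prop) L, (forall a, In a L -> exists g, R a g) ->
  exists G, (forall a, In a L -> exists g, In g G /\ R a g) /\ (forall g, In g G -> exists a, In a L /\ R a g).
Proof.
  intros R L; induction L as [|a L IH]; intros H.
  - exists []; split; [intros a []|intros g []].
  - destruct (H a (or_introl eq_refl)) as [g Hg].
    destruct IH as [G [G1 G2]]. { intros x Hx; apply H; right; auto. }
    exists (g :: G). split.
    + intros x [<-|Hx]. * exists g; simpl; auto. * destruct (G1 x Hx) as [y [Hy Ry]]; exists y; simpl; auto.
    + intros y [<-|Hy]. * exists a; simpl; auto. * destruct (G2 y Hy) as [x [Hx Rx]]; exists x; simpl; auto.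
Qed.

Fixpoint gor (G : list cform) : form :=
  match G with
  | [] => FCl CBot
  | g :: G' => FGor (FCl g) (gor G')
  end.

Lemma gor_intro : forall G g T, In g G -> csat T g -> sat T (gor G).
Proof. induction G; intros g T Hg H; simpl in *; [destruct Hg|]. destruct Hg as [<-|Hg]; eauto. Qed.

Lemma gor_elim : forall G T, sat T (gor G) -> (exists g, In g G /\ csat T g) \/ csat T CBot.
Proof.
  induction G as [|g G IH]; intros T H; simpl in *; auto.
  destruct H as [H|H]; [left; eauto|]. destruct (IH T H) as [[x [Hx Tx]]|H']; auto.
  left; eauto.
Qed.

Lemma gor_pol : forall G p s, pol (gor G) p s -> exists g, In g G /\ cpol g p s.
Proof.
  induction G as [|g G IH]; intros p s H; simpl in *; [destruct H|].
  destruct H as [H|H]; [eauto|]. destruct (IH p s H) as [x [Hx Px]]; eauto.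
Qed.

Theorem corollary8p2 : forall phi psi : form,
  entails phi psi ->
  exists theta : form,
    entails phi theta /\ entails theta psi /\
    (forall p, Ppos theta p -> Ppos phi p /\ Ppos psi p) /\
    (forall p, Pneg theta p -> Pneg phi p /\ Pneg psi p).
Proof.
  intros phi psi H.
  set (R := fun a g => cent a g /\ (exists b, In b (nf psi) /\ cent g b) /\
        (forall q s, cpol g q s -> pol phi q s /\ pol psi q s)).
  destruct (collect R (nf phi)) as [G [G1 G2]].
  { intros a Ha. destruct (nf_cent phi psi H a Ha) as [b [Hb Cab]].
    destruct (lyndon_cl a b Cab) as [g [C1 [C2 C3]]].
    exists g. split; auto. split; [exists b; auto|].
    intros q s Hq. destruct (C3 q s Hq). split; eapply nf_pol; eauto. }
  exists (gor G). split; [|split; [|split]].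
  - intros X T _ _ _ HT. apply nf_sat in HT. destruct HT as [a [Ha Ta]].
    destruct (G1 a Ha) as [g [Hg [Cag _]]]. apply (gor_intro G g); auto.
    apply flat. rewrite flat in Ta. intros v Hv; auto.
  - intros X T _ _ _ HT. apply gor_elim in HT. destruct HT as [[g [Hg Tg]]|HT].
    + destruct (G2 g Hg) as [a [_ [_ [[b [Hb Cgb]] _]]]].
      apply nf_sat. exists b; split; auto. apply flat. rewrite flat in Tg. intros v Hv; auto.
    + destruct (nf_ne psi) as [b Hb]. apply nf_sat. exists b; split; auto.
      apply flat. intros v Hv. exfalso; eapply HT; eauto.
  - intros p Hp. unfold Ppos in *. destruct (gor_pol G p true Hp) as [g [Hg Pg]].
    destruct (G2 g Hg) as [a [_ [_ [_ P]]]]. auto.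
  - intros p Hp. unfold Pneg in *. destruct (gor_pol G p false Hp) as [g [Hg Pg]].
    destruct (G2 g Hg) as [a [_ [_ [_ P]]]]. auto.
Qed.
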